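(* Suppose the e-values are valid, i.e. $\mathbb{E}[e_t\mid\mathcal{F}_{t-1}]\le1$ a.s. whenever $\theta_t=0$, and fix $d\in(0,1]$. (a) If the $\mathcal{F}_{t-1}$-measurable testing levels satisfy, a.s. for every $t\ge1$, $$\mathrm{mem\text{-}}\widehat{\mathrm{FDP}}^{\mathrm{LORD}}(t):=\sum_{j=1}^t\frac{\alpha_j}{dR^{\mathrm d}_{j-1}+1}\le\alpha,$$ then $\mathrm{mem\text{-}FDR}(t)\le\alpha$ for all $t$. (b) Let $(\lambda_t)_{t\ge1}$ be $(0,1)$-valued with each $\lambda_t$ $\mathcal{F}_{t-1}$-measurable, and define $$\mathrm{mem\text{-}}\widehat{\mathrm{FDP}}^{\mathrm{SAFFRON}}(t):=\sum_{j=1}^t\frac{\alpha_j}{dR^{\mathrm d}_{j-1}+1}\cdot\frac{\mathbb{1}\{e_j<1/\lambda_j\}}{1-\lambda_j}.$$ Then $\mathbb{E}[\mathrm{mem\text{-}}\widehat{\mathrm{FDP}}^{\mathrm{SAFFRON}}(t)]\ge\mathbb{E}[\mathrm{mem\text{-}FDP}^*(t)]$ for all $t$, where $\mathrm{mem\text{-}FDP}^*(t)=\sum_{j\in\mathcal{H}_0(t)}\alpha_j/(dR^{\mathrm d}_{j-1}+1)$; and if the testing levels satisfy $\mathrm{mem\text{-}}\widehat{\mathrm{FDP}}^{\mathrm{SAFFRON}}(t)\le\alpha$ a.s. for every $t$, then $\mathrm{mem\text{-}FDR}(t)\le\alpha$ for all $t$.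
   Context: Let $\alpha\in(0,1)$ be a target level. Hypotheses are indexed by $t=1,2,\dots$; $\theta_t\in\{0,1\}$ is a fixed (non-random) indicator with $\theta_t=0$ iff the $t$-th null hypothesis is true. $e_1,e_2,\dots$ are nonnegative random variables (e-values). Testing levels $\alpha_1,\alpha_2,\dots$ are nonnegative random variables and the decisions are $\delta_t=\mathbb{1}\{e_t\ge 1/\alpha_t\}$ (with $\delta_t=0$ when $\alpha_t=0$). Let $\mathcal{F}_t=\sigma(\delta_1,\dots,\delta_t)$, $\mathcal{F}_0$ trivial; each $\alpha_t$ is required to be $\mathcal{F}_{t-1}$-measurable. $\mathcal{H}_0(t)=\{j\le t:\theta_j=0\}$. For a decay parameter $d\in(0,1]$, $R^{\mathrm d}_t=\sum_{j=1}^t d^{t-j}\delta_j$ with $R^{\mathrm d}_0=0$, and the decaying-memory FDR is $\mathrm{mem\text{-}FDR}(t)=\mathbb{E}\big[\sum_{j\in\mathcal{H}_0(t)}d^{t-j}\delta_j\big/R^{\mathrm d}_t\big]$ with the convention $0/0=0$. *)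

(* Defs.v *)
From HB Require Import structures.
From mathcomp Require Import all_boot all_order all_algebra.
From mathcomp Require Import all_classical all_reals all_analysis.
Set Implicit Arguments. Unset Strict Implicit. Unset Printing Implicit Defensive.
Import Order.TTheory GRing.Theory Num.Theory.
Local Open Scope classical_set_scope.
Local Open Scope ring_scope.

Section OnlineEFDR.
Context {d : measure_display} {T : measurableType d} {R : realType}.

Definition deltab (e al : nat -> T -> R) (t : nat) (x : T) : bool :=
  (al t x != 0) && (1 / al t x <= e t x)%R.

Definition delta (e al : nat -> T -> R) (t : nat) (x : T) : R :=
  (deltab e al t x)%:R.

Definition Rdec (dd : R) (e al : nat -> T -> R) (t : nat) (x : T) : R :=
  \sum_(1 <= j < t.+1) dd ^+ (t - j) * delta e al j x.

(* F_t = sigma(delta_1, ..., delta_t): since the delta_j are {0,1}-valued,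
   this sigma-algebra consists exactly of the preimages of arbitrary sets
   of decision vectors; F_0 = {emptyset, T} is trivial. *)
Definition Fsig (e al : nat -> T -> R) (t : nat) : set (set T) :=
  [set A | exists B : set (nat -> bool),
     A = [set x | B (fun j => ((1 <= j <= t)%N && deltab e al j x))]].

Definition Fmeas (e al : nat -> T -> R) (t : nat) (f : T -> R) : Prop :=
  forall S : set R, measurable S -> Fsig e al t (f @^-1` S).

(* E[ f | F_t ] <= 1 a.s., for nonnegative f, via the defining property of
   (generalized) conditional expectation: E[f 1_A] <= P(A) for all A in F_t *)
Definition condexp_le1 (P : probability T R) (e al : nat -> T -> R) (t : nat)
  (f : T -> R) : Prop :=
  forall A, Fsig e al t A -> (\int[P]_(x in A) (f x)%:E <= P A)%E.

(* mem-FDR(t), theta j = false iff the j-th null is true; 0/0 = 0 *)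
Definition memFDR (P : probability T R) (dd : R) (theta : nat -> bool)
  (e al : nat -> T -> R) (t : nat) : \bar R :=
  \int[P]_x ((\sum_(1 <= j < t.+1 | ~~ theta j) dd ^+ (t - j) * delta e al j x)
              / Rdec dd e al t x)%:E.

Definition memFDP_LORD (dd : R) (e al : nat -> T -> R) (t : nat) (x : T) : R :=
  \sum_(1 <= j < t.+1) al j x / (dd * Rdec dd e al j.-1 x + 1).

Definition memFDP_SAFFRON (dd : R) (e al lam : nat -> T -> R) (t : nat) (x : T) : R :=
  \sum_(1 <= j < t.+1) al j x / (dd * Rdec dd e al j.-1 x + 1)
                       * (((e j x < 1 / lam j x)%R : bool)%:R / (1 - lam j x)).

Definition memFDP_star (dd : R) (theta : nat -> bool) (e al : nat -> T -> R)
  (t : nat) (x : T) : R :=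
  \sum_(1 <= j < t.+1 | ~~ theta j) al j x / (dd * Rdec dd e al j.-1 x + 1).

End OnlineEFDR.

(* Main.v *)
Require Import Defs.
From HB Require Import structures.
From mathcomp Require Import all_boot all_order all_algebra.
From mathcomp Require Import all_classical all_reals all_analysis.
From mathcomp Require Import measurable_realfun.
From mathcomp Require Import ring lra.
Import Order.TTheory GRing.Theory Num.Theory.
Local Open Scope classical_set_scope.
Local Open Scope ring_scope.
Section S.
Context (d : measure_display) (T : measurableType d) (R : realType).

Lemma measurable_inv : measurable_fun setT (fun x : R => x^-1).
Proof.
have -> : (fun x : R => x^-1) = (fun x => if x == 0 then 0 else x^-1).
  by apply/funext => x; case: eqP => // ->; rewrite invr0.
apply: measurable_fun_if => //.
- exact: measurable_fun_eqr.
apply: open_continuous_measurable_fun.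
  rewrite (_ : _ `&` _ = [set x | x != 0]); first exact: open_neq.
  by apply/seteqP; split => x /=; [case=> _ ->|move/negbTE].
move=> x; rewrite inE /= => -[_ /negbT x0].
exact: inv_continuous.
Qed.

Variables (e al : nat -> T -> R).
Hypothesis me : forall t, measurable_fun setT (e t).
Hypothesis mal : forall t, measurable_fun setT (al t).

Lemma mdeltab j : measurable_fun setT (deltab e al j).
Proof.
apply: measurable_and.
  apply: measurable_neg; apply: measurable_fun_eqr => //; exact: measurable_cst.
apply: measurable_fun_ler => //.
apply: measurable_funM; first exact: measurable_cst.
exact: measurableT_comp measurable_inv (mal j).
Qed.

Lemma mdelta j : measurable_fun setT (delta e al j).
Proof.
rewrite /delta; have -> : (fun x => (deltab e al j x)%:R) = (fun x => if deltab e al j x then (1:R) else 0).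
  by apply/funext => x; case: deltab.
apply: measurable_fun_ifT; [exact: mdeltab|exact: measurable_cst|exact: measurable_cst].
Qed.

Lemma mRdec dd t : measurable_fun setT (Rdec dd e al t).
Proof.
rewrite /Rdec; apply: measurable_sum => j.
apply: measurable_funM; [exact: measurable_cst| exact: mdelta].
Qed.
Variable dd : R.
Hypothesis dd0 : 0 < dd.
Hypothesis al0 : forall t x, 0 <= al t x.
Hypothesis e0 : forall t x, 0 <= e t x.

Lemma delta_ge0 j x : 0 <= delta e al j x.
Proof. by rewrite /delta ler0n. Qed.

Lemma Rdec_ge0 t x : 0 <= Rdec dd e al t x.
Proof.
rewrite /Rdec; apply: sumr_ge0 => j _; apply: mulr_ge0; last exact: delta_ge0.
by apply: exprn_ge0; exact: ltW.
Qed.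

Lemma Rdec_rec j x : Rdec dd e al j.+1 x = dd * Rdec dd e al j x + delta e al j.+1 x.
Proof.
rewrite /Rdec big_nat_recr //= subnn expr0 mul1r; congr (_ + _).
rewrite big_distrr /=; apply: eq_big_nat => i /andP[i1 ij].
by rewrite mulrA -exprS subSn.
Qed.

Lemma Rdec_mono j t x : (j <= t)%N ->
  dd ^+ (t - j) * Rdec dd e al j x <= Rdec dd e al t x.
Proof.
elim: t => [|t IH]; first by rewrite leqn0 => /eqP ->; rewrite subnn expr0 mul1r.
rewrite leq_eqVlt => /orP[/eqP ->|]; first by rewrite subnn expr0 mul1r.
rewrite ltnS => jt; rewrite Rdec_rec subSn // exprS -mulrA.
apply: le_trans (_ : dd * Rdec dd e al t x <= _); last first.
  by rewrite lerDl; exact: delta_ge0.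
by rewrite ler_pM2l // IH.
Qed.

Lemma den_gt0 j x : 0 < dd * Rdec dd e al j x + 1.
Proof. by apply: ltr_wpDl => //; apply: mulr_ge0; [exact: ltW|exact: Rdec_ge0]. Qed.

Lemma pt_bound1 j t x : (1 <= j <= t)%N ->
  dd ^+ (t - j) * delta e al j x / Rdec dd e al t x
  <= delta e al j x / (dd * Rdec dd e al j.-1 x + 1).
Proof.
case/andP=> j1 jt; rewrite /delta; case Hd: (deltab e al j x); last by rewrite /= !mulr0 !mul0r.
have Rj : Rdec dd e al j x = dd * Rdec dd e al j.-1 x + 1.
  by rewrite -{1}(prednK j1) Rdec_rec prednK // /delta Hd.
have := @Rdec_mono j t x jt; rewrite Rj => H.
have p1 : 0 < dd ^+ (t - j) by apply: exprn_gt0.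
have Rt : 0 < Rdec dd e al t x.
  by apply: lt_le_trans H; apply: mulr_gt0 => //; exact: den_gt0.
rewrite /= mulr1 ler_pdivrMr // mulrC mul1r ler_pdivlMr ?den_gt0 //.
Qed.

Lemma pt_bound2 j x c : 0 < c ->
  delta e al j x / c <= al j x / c * e j x.
Proof.
move=> c0; rewrite /delta; case Hd: (deltab e al j x); last first.
  rewrite [X in X <= _](_ : _ = 0); last by rewrite /= mul0r.
  by apply: mulr_ge0 => //; apply: divr_ge0 => //; exact: ltW.
move: Hd; rewrite /deltab => /andP[an h].
have ap : 0 < al j x by rewrite lt_def an al0.
rewrite /= mulrAC ler_pM2r ?invr_gt0 //.
by move: h; rewrite ler_pdivrMr // mulrC.
Qed.

Lemma bigI_mem (I : eqType) (s : seq I) (F : I -> set T) x :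
  (\big[setI/setT]_(i <- s) F i) x <-> (forall i, i \in s -> F i x).
Proof.
elim: s => [|a s IH]; first by rewrite big_nil; split.
rewrite big_cons; split.
  case=> Fa /IH H i; rewrite in_cons => /orP[/eqP ->//|]; exact: H.
move=> H; split; first by apply: H; rewrite in_cons eqxx.
by apply/IH => i iS; apply: H; rewrite in_cons iS orbT.
Qed.

Lemma bigU_mem (I : eqType) (s : seq I) (F : I -> set T) x :
  (\big[setU/set0]_(i <- s) F i) x <-> (exists2 i, i \in s & F i x).
Proof.
elim: s => [|a s IH]; first by rewrite big_nil; split => // -[].
rewrite big_cons; split.
  case=> [Fa|/IH [i iS Fi]]; first by exists a; rewrite ?in_cons ?eqxx.
  by exists i; rewrite // in_cons iS orbT.
case=> i; rewrite in_cons => /orP[/eqP -> Fa|iS Fi]; first by left.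
by right; apply/IH; exists i.
Qed.

Definition Atom n (v : {ffun 'I_n -> bool}) : set T :=
  [set x | forall i : 'I_n, deltab e al i.+1 x = v i].

Lemma mAtom n v : measurable (Atom n v).
Proof.
rewrite (_ : Atom n v = \big[setI/setT]_(i <- index_enum 'I_n)
                          (deltab e al i.+1 @^-1` [set v i])).
  apply: bigsetI_measurable => i _; rewrite -[X in measurable X]setTI.
  exact: mdeltab.
apply/seteqP; split => x.
  by move=> H; apply/bigI_mem => i _; exact: H.
by move/bigI_mem => H i; apply: H; rewrite mem_index_enum.
Qed.

Lemma Atom_self n (x : T) : Atom n [ffun i : 'I_n => deltab e al i.+1 x] x.
Proof. by move=> i; rewrite ffunE. Qed.

Lemma Atom_uniq n v w x : Atom n v x -> Atom n w x -> v = w.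
Proof. by move=> Hv Hw; apply/ffunP => i; rewrite -Hv -Hw. Qed.

Lemma Atom_delta n v x y k : Atom n v x -> Atom n v y -> (1 <= k <= n)%N ->
  deltab e al k x = deltab e al k y.
Proof.
move=> Hx Hy /andP[k1 kn]; have ki : (k.-1 < n)%N by rewrite prednK.
by have := Hx (Ordinal ki); have := Hy (Ordinal ki); rewrite /= prednK // => -> ->.
Qed.

Lemma Atom_Fsig n v : Fsig e al n (Atom n v).
Proof.
exists [set f | forall i : 'I_n, f i.+1 = v i].
apply/seteqP; split => x /= H i.
  by rewrite ltn_ord /= H.
by have := H i; rewrite ltn_ord.
Qed.

Lemma Fmeas_const n f v x y : Fmeas e al n f -> Atom n v x -> Atom n v y -> f x = f y.
Proof.
move=> Hf Hx Hy; have [B HB] := Hf [set f x] (measurable_set1 _).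
have : (f @^-1` [set f x]) x by [].
rewrite HB /= => Bx.
have : (f @^-1` [set f x]) y.
  rewrite HB /=; rewrite (_ : (fun j => _ && deltab e al j y) = (fun j => (1 <= j <= n)%N && deltab e al j x)) //.
  apply/funext => k; case: (boolP (1 <= k <= n)%N) => //= kb.
  by rewrite (@Atom_delta n v x y k Hx Hy kb).
by move=> /= ->.
Qed.

Lemma Rdec_const n v x y : Atom n v x -> Atom n v y ->
  Rdec dd e al n x = Rdec dd e al n y.
Proof.
move=> Hx Hy; apply: eq_big_nat => k /andP[k1 kn].
by rewrite /delta (@Atom_delta n v x y k Hx Hy) // k1 -ltnS kn.
Qed.

Lemma eqT_Atom n : [set: T] = \big[setU/set0]_(v <- enum {ffun 'I_n -> bool}) Atom n v.
Proof.
apply/seteqP; split => x // _; apply/bigU_mem.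
by exists [ffun i : 'I_n => deltab e al i.+1 x]; [rewrite mem_enum|exact: Atom_self].
Qed.

Variable P : probability T R.

Lemma split_int n (f : T -> \bar R) : (forall x, (0 <= f x)%E) -> measurable_fun setT f ->
  (\int[P]_x f x = \sum_(v <- enum {ffun 'I_n -> bool}) \int[P]_(x in Atom n v) f x)%E.
Proof.
move=> f0 mf; rewrite {1}(eqT_Atom n); apply: ge0_integral_bigsetU => //.
- exact: mAtom.
- exact: enum_uniq.
- by move=> v w _ _ [x [Hv Hw]]; exact: (@Atom_uniq n v w x Hv Hw).
- by rewrite -eqT_Atom.
Qed.

Lemma K1 n (f phi : T -> R) : condexp_le1 P e al n f -> (forall x, 0 <= f x) ->
  measurable_fun setT f ->
  (forall v x y, Atom n v x -> Atom n v y -> phi x = phi y) ->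
  (forall x, 0 <= phi x) -> measurable_fun setT phi ->
  (\int[P]_x (phi x * f x)%:E <= \int[P]_x (phi x)%:E)%E.
Proof.
move=> Hc f0 mf Hphi phi0 mphi.
rewrite (@split_int n (fun x => (phi x * f x)%:E)); first last.
- by apply/measurable_EFinP; exact: measurable_funM.
- by move=> x; rewrite lee_fin mulr_ge0.
rewrite (@split_int n (fun x => (phi x)%:E)); first last.
- exact/measurable_EFinP.
- by move=> x; rewrite lee_fin.
apply: lee_sum => v _.
have mA := mAtom n v.
case: (pselect (exists x0, Atom n v x0)) => [[x0 Hx0]|nA]; last first.
  rewrite (_ : Atom n v = set0) ?integral_set0 //.
  by apply/seteqP; split => x // Hx; apply: nA; exists x.
rewrite (eq_integral (fun x => (phi x0)%:E * (f x)%:E)%E); last first.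
  by move=> x; rewrite in_setE => Hx; rewrite (Hphi v x x0 Hx Hx0) EFinM.
rewrite [leRHS](eq_integral (fun x => cst (phi x0)%:E x)); last first.
  by move=> x; rewrite in_setE => Hx; rewrite (Hphi v x x0 Hx Hx0).
have mfA : measurable_fun (Atom n v) (fun x => (f x)%:E).
  by apply/measurable_EFinP; exact: measurable_funS mf.
rewrite ge0_integralZl //; try (by move=> x _; rewrite lee_fin); try (by rewrite lee_fin).
rewrite integral_cst //.
apply: lee_wpmul2l; first by rewrite lee_fin.
exact: Hc (Atom_Fsig n v).
Qed.

Lemma mind (g h : T -> R) : measurable_fun setT g -> measurable_fun setT h ->
  measurable_fun setT (fun x => ((g x < h x)%R : bool)%:R : R).
Proof.
move=> mg mh.
have -> : (fun x => ((g x < h x)%R : bool)%:R : R) = (fun x => if (g x < h x)%R then (1:R) else 0).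
  by apply/funext => x; case: (g x < h x)%R.
apply: measurable_fun_ifT; [exact: measurable_fun_ltr|exact: measurable_cst|exact: measurable_cst].
Qed.

Lemma fin_aux (c lc : R) (PA I : \bar R) : 0 <= c -> 0 < lc -> lc < 1 ->
  (0 <= PA)%E -> (PA <= 1)%E -> (0 <= I)%E -> (I <= PA)%E ->
  (PA <= I + lc%:E * PA)%E -> (c%:E * PA <= (c / (1 - lc))%:E * I)%E.
Proof.
move=> c0 lc0 lc1; case: PA => [p| |] //= p0 p1; case: I => [i| |] //= i0 ip.
rewrite -!EFinM -EFinD !lee_fin => hp.
have h1 : (1 - lc) * p <= i by lra.
have -> : c * p = c / (1 - lc) * ((1 - lc) * p).
  by rewrite mulrA divfK // subr_eq0 eq_sym lt_eqF.
by apply: ler_wpM2l => //; rewrite divr_ge0 // subr_ge0 ltW.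
Qed.

Lemma K2 n (f phi l : T -> R) : condexp_le1 P e al n f -> (forall x, 0 <= f x) ->
  measurable_fun setT f ->
  (forall v x y, Atom n v x -> Atom n v y -> phi x = phi y) ->
  (forall v x y, Atom n v x -> Atom n v y -> l x = l y) ->
  (forall x, 0 <= phi x) -> measurable_fun setT phi ->
  (forall x, 0 < l x < 1) -> measurable_fun setT l ->
  (\int[P]_x (phi x)%:E <=
   \int[P]_x (phi x * (((f x < 1 / l x)%R : bool)%:R / (1 - l x)))%:E)%E.
Proof.
move=> Hc f0 mf Hphi Hl phi0 mphi l01 ml.
have mr : measurable_fun setT (fun x => phi x * (((f x < 1 / l x)%R : bool)%:R / (1 - l x))).
  apply: measurable_funM => //; apply: measurable_funM.
    apply: mind => //; apply: measurable_funM; first exact: measurable_cst.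
    exact: measurableT_comp measurable_inv ml.
  apply: measurableT_comp measurable_inv _.
  by apply: measurable_funB => //; exact: measurable_cst.
rewrite (@split_int n (fun x => (phi x * (((f x < 1 / l x)%R : bool)%:R / (1 - l x)))%:E)); first last.
- exact/measurable_EFinP.
- move=> x; rewrite lee_fin; apply: mulr_ge0 => //; apply: divr_ge0 => //.
  by have := l01 x; rewrite subr_ge0 => /andP[_ /ltW].
rewrite (@split_int n (fun x => (phi x)%:E)); first last.
- exact/measurable_EFinP.
- by move=> x; rewrite lee_fin.
apply: lee_sum => v _.
have mA := mAtom n v.
case: (pselect (exists x0, Atom n v x0)) => [[x0 Hx0]|nA]; last first.
  rewrite (_ : Atom n v = set0) ?integral_set0 //.
  by apply/seteqP; split => x // Hx; apply: nA; exists x.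
set c := phi x0; set lc := l x0.
have /andP[lc0 lc1] := l01 x0; rewrite -/lc in lc0 lc1.
have c0 : 0 <= c := phi0 x0.
set ind := fun x => ((f x < 1 / lc)%R : bool)%:R : R.
have mind0 : measurable_fun (Atom n v) ind.
  apply: measurable_funS (_ : measurable_fun setT ind) => //.
  by apply: mind => //; exact: measurable_cst.
have ind0 x : 0 <= ind x by rewrite /ind; case: (_ < _).
rewrite [leRHS](eq_integral (fun x => (c / (1 - lc))%:E * (ind x)%:E)%E); last first.
  move=> x; rewrite in_setE => Hx; rewrite -EFinM /ind.
  by rewrite (Hphi v x x0 Hx Hx0) (Hl v x x0 Hx Hx0) -/c -/lc mulrCA mulrC.
rewrite [leLHS](eq_integral (fun x => cst c%:E x)); last first.
  by move=> x; rewrite in_setE => Hx; rewrite (Hphi v x x0 Hx Hx0).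
rewrite ge0_integralZl //; first last.
- by rewrite lee_fin divr_ge0 // subr_ge0 ltW.
- by move=> x _; rewrite lee_fin.
- exact/measurable_EFinP.
rewrite integral_cst //.
set I := (\int[P]_(x in Atom n v) (ind x)%:E)%E.
have mfA : measurable_fun (Atom n v) (fun x => (f x)%:E).
  by apply/measurable_EFinP; exact: measurable_funS mf.
have mi : measurable_fun (Atom n v) (fun x => (ind x)%:E) by exact/measurable_EFinP.
have mc1 : measurable_fun (Atom n v) (cst 1%E : T -> \bar R) by exact: measurable_cst.
have hp : (P (Atom n v) <= I + lc%:E * P (Atom n v))%E.
  rewrite -[X in (X <= _)%E]mul1e -integral_cst //.
  have mlf : measurable_fun (Atom n v) (fun x => (lc * f x)%:E).
    under eq_fun do rewrite EFinM.
    by apply: emeasurable_funM => //; exact: measurable_cst.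
  have msum : measurable_fun (Atom n v) (fun x => ((ind x)%:E + (lc * f x)%:E)%E).
    by apply: emeasurable_funD => //; exact/measurable_EFinP.
  apply: (@le_trans _ _ (\int[P]_(x in Atom n v) ((ind x)%:E + (lc * f x)%:E))%E).
    apply: ge0_le_integral => //.
    move=> x _; rewrite /= -EFinD lee_fin /ind.
    case: ltP => H; first by rewrite lerDl mulr_ge0 // ltW.
    by rewrite add0r; move: H; rewrite ler_pdivrMr // mulrC.
  rewrite ge0_integralD //; last by move=> x _; rewrite lee_fin mulr_ge0 // ltW.
  apply: leeD2l.
  under eq_integral do rewrite EFinM.
  rewrite ge0_integralZl //; first last.
  - by rewrite lee_fin ltW.
  - by move=> x _; rewrite lee_fin.
  apply: lee_wpmul2l; first by rewrite lee_fin ltW.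
  exact: Hc (Atom_Fsig n v).
  by move=> x _; rewrite lee_fin.
have PA0 : (0 <= P (Atom n v))%E := measure_ge0 _ _.
have PA1 : (P (Atom n v) <= 1)%E := probability_le1 _ mA.
have I0 : (0 <= I)%E by apply: integral_ge0 => x _; rewrite lee_fin.
have IP : (I <= P (Atom n v))%E.
  rewrite -[X in (_ <= X)%E]mul1e -integral_cst //.
  by apply: ge0_le_integral => // x _; rewrite /= lee_fin /ind; case: (_ < _) => /=; rewrite ?ler01 ?lexx.
exact: fin_aux.
Qed.

Definition gj j x := al j x / (dd * Rdec dd e al j.-1 x + 1).

Lemma mgj j : measurable_fun setT (gj j).
Proof.
apply: measurable_funM => //; apply: measurableT_comp measurable_inv _.
apply: measurable_funD; last exact: measurable_cst.
by apply: measurable_funM; [exact: measurable_cst|exact: mRdec].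
Qed.

Lemma gj_ge0 j x : 0 <= gj j x.
Proof. by apply: divr_ge0 => //; apply: ltW; exact: den_gt0. Qed.

Lemma gj_const j v x y : Fmeas e al j.-1 (al j) -> Atom j.-1 v x -> Atom j.-1 v y ->
  gj j x = gj j y.
Proof.
move=> Hf Hx Hy; rewrite /gj (@Fmeas_const j.-1 (al j) v x y Hf Hx Hy).
by rewrite (@Rdec_const j.-1 v x y Hx Hy).
Qed.

Lemma msum_cond (F : nat -> T -> R) (Pr : pred nat) m n :
  (forall j, measurable_fun setT (F j)) ->
  measurable_fun setT (fun x => \sum_(m <= j < n | Pr j) F j x).
Proof.
move=> mF.
rewrite (_ : (fun x => _) = (fun x => \sum_(j <- index_iota m n) (if Pr j then F j x else 0))).
  apply: measurable_sum => j; case: (Pr j) => //; exact: measurable_cst.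
by apply/funext => x; rewrite big_mkcond.
Qed.

Lemma int_sum (F : nat -> T -> R) (Pr : pred nat) m n :
  (forall j, measurable_fun setT (F j)) -> (forall j x, 0 <= F j x) ->
  (\int[P]_x (\sum_(m <= j < n | Pr j) F j x)%:E =
   \sum_(m <= j < n | Pr j) \int[P]_x (F j x)%:E)%E.
Proof.
move=> mF F0.
rewrite (eq_integral (fun x => \sum_(j <- [seq j <- index_iota m n | Pr j]) (F j x)%:E)%E); last first.
  by move=> x _; rewrite big_filter sumEFin.
rewrite ge0_integral_sum //; first by rewrite big_filter.
- by move=> j; exact/measurable_EFinP.
- by move=> j x _; rewrite lee_fin.
Qed.

Lemma sub_sum (a : nat -> \bar R) (Pr : pred nat) m n : (forall j, (0 <= a j)%E) ->
  (\sum_(m <= j < n | Pr j) a j <= \sum_(m <= j < n) a j)%E.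
Proof.
move=> a0; rewrite big_mkcond /=; apply: lee_sum => j _.
by case: (Pr j).
Qed.

Lemma core theta t :
  (forall t, (1 <= t)%N -> Fmeas e al t.-1 (al t)) ->
  (forall t, (1 <= t)%N -> ~~ theta t -> condexp_le1 P e al t.-1 (e t)) ->
  (memFDR P dd theta e al t <= \sum_(1 <= j < t.+1 | ~~ theta j) \int[P]_x (gj j x)%:E)%E.
Proof.
move=> hF hC; rewrite /memFDR.
apply: (@le_trans _ _ (\int[P]_x (\sum_(1 <= j < t.+1 | ~~ theta j) (gj j x * e j x))%:E)%E).
  apply: ge0_le_integral => //.
  - move=> x _; rewrite lee_fin; apply: divr_ge0; last exact: Rdec_ge0.
    apply: sumr_ge0 => j _; apply: mulr_ge0; last exact: delta_ge0.
    by apply: exprn_ge0; exact: ltW.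
  - apply/measurable_EFinP; apply: measurable_funM.
      apply: msum_cond => j; apply: measurable_funM; [exact: measurable_cst|exact: mdelta].
    by apply: measurableT_comp measurable_inv _; exact: mRdec.
  - apply/measurable_EFinP; apply: msum_cond => j.
    by apply: measurable_funM; [exact: mgj|exact: me].
  move=> x _; rewrite lee_fin mulr_suml big_nat_cond [leRHS]big_nat_cond.
  apply: ler_sum => j /andP[/andP[j1 jt] _].
  apply: le_trans (@pt_bound1 j t x _) _; first by rewrite j1 -ltnS jt.
  exact: pt_bound2 (den_gt0 _ _).
rewrite int_sum; first last.
- by move=> j x; apply: mulr_ge0; [exact: gj_ge0|exact: e0].
- by move=> j; apply: measurable_funM; [exact: mgj|exact: me].
rewrite big_nat_cond [leRHS]big_nat_cond; apply: lee_sum => j /andP[/andP[j1 _] nj].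
apply: (@K1 j.-1) => //.
- exact: hC.
- by move=> v x y Hx Hy; apply: gj_const => //; exact: hF.
- exact: gj_ge0.
- exact: mgj.
Qed.
End S.
Theorem proposition3 (d : measure_display) (T : measurableType d) (R : realType)
  (P : probability T R) (alpha dd : R) (theta : nat -> bool)
  (e al : nat -> T -> R) :
  0 < alpha < 1 ->
  0 < dd <= 1 ->
  (forall t x, 0 <= e t x) ->
  (forall t, measurable_fun setT (e t)) ->
  (forall t x, 0 <= al t x) ->
  (forall t, measurable_fun setT (al t)) ->
  (forall t, (1 <= t)%N -> Fmeas e al t.-1 (al t)) ->
  (forall t, (1 <= t)%N -> ~~ theta t -> condexp_le1 P e al t.-1 (e t)) ->
  (* (a) LORD-type rule *)
  ((forall t, (1 <= t)%N -> {ae P, forall x, memFDP_LORD dd e al t x <= alpha}) ->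
     forall t, (memFDR P dd theta e al t <= alpha%:E)%E)
  /\
  (* (b) SAFFRON-type rule *)
  (forall lam : nat -> T -> R,
     (forall t x, 0 < lam t x < 1) ->
     (forall t, measurable_fun setT (lam t)) ->
     (forall t, (1 <= t)%N -> Fmeas e al t.-1 (lam t)) ->
     (forall t, (\int[P]_x (memFDP_star dd theta e al t x)%:E
                 <= \int[P]_x (memFDP_SAFFRON dd e al lam t x)%:E)%E)
     /\
     ((forall t, (1 <= t)%N ->
         {ae P, forall x, memFDP_SAFFRON dd e al lam t x <= alpha}) ->
      forall t, (memFDR P dd theta e al t <= alpha%:E)%E)).
Proof.
move=> /andP[a0 a1] /andP[dd0 dd1] e0 me al0 mal hF hC.
have star_int t : (\int[P]_x (memFDP_star dd theta e al t x)%:E =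
    \sum_(1 <= j < t.+1 | ~~ theta j) \int[P]_x (gj _ _ _ e al dd j x)%:E)%E.
  rewrite /memFDP_star; apply: int_sum => //.
  - by move=> j; exact: mgj.
  - by move=> j x; exact: gj_ge0.
have ig0 j : (0 <= \int[P]_x (gj _ _ _ e al dd j x)%:E)%E.
  by apply: integral_ge0 => x _; rewrite lee_fin; exact: gj_ge0.
have finB (F : T -> R) : {ae P, forall x, F x <= alpha} ->
    (forall x, 0 <= F x) -> measurable_fun setT F ->
    (\int[P]_x (F x)%:E <= alpha%:E)%E.
  move=> hF0 F0 mF.
  apply: (@le_trans _ _ (\int[P]_x (cst alpha%:E x))%E).
    have mFE : measurable_fun setT (fun x => (F x)%:E) by exact/measurable_EFinP.
    have mc : measurable_fun setT (cst alpha%:E : T -> \bar R) by exact: measurable_cst.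
    apply: ae_ge0_le_integral => //; try (by move=> x _; rewrite lee_fin ?F0 ?ltW).
    by apply: filterS hF0 => x Hx _; rewrite lee_fin.
  rewrite integral_cst //; apply: (@le_trans _ _ (alpha%:E * 1)%E); last by rewrite mule1.
  by apply: lee_wpmul2l; [rewrite lee_fin ltW|exact: probability_le1].
have coreT t := @core _ _ _ e al me mal dd dd0 al0 e0 P theta t hF hC.
split.
  move=> hL t; apply: le_trans (coreT t) _.
  case: t => [|t]; first by rewrite big_geq // lee_fin ltW.
  apply: le_trans (sub_sum _ _ _ _ _ ig0) _.
  have LE : (\int[P]_x (memFDP_LORD dd e al t.+1 x)%:E =
      \sum_(1 <= j < t.+2) \int[P]_x (gj _ _ _ e al dd j x)%:E)%E.
    rewrite /memFDP_LORD; apply: int_sum => //.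
    - by move=> j; exact: mgj.
    - by move=> j x; exact: gj_ge0.
  rewrite -LE; apply: finB; first exact: hL.
    by move=> x; apply: sumr_ge0 => j _; exact: gj_ge0.
  by rewrite /memFDP_LORD; apply: msum_cond => j; exact: mgj.
move=> lam hlam mlam hFl.
set h := fun j x => gj _ _ _ e al dd j x * (((e j x < 1 / lam j x)%R : bool)%:R / (1 - lam j x)).
have mh j : measurable_fun setT (h j).
  apply: measurable_funM; first exact: mgj.
  apply: measurable_funM.
    apply: mind => //; apply: measurable_funM; first exact: measurable_cst.
    exact: measurableT_comp (@measurable_inv R) (mlam j).
  apply: measurableT_comp (@measurable_inv R) _.
  by apply: measurable_funB => //; exact: measurable_cst.
have h0 j x : 0 <= h j x.
  apply: mulr_ge0; first exact: gj_ge0.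
  apply: divr_ge0; first by case: (_ < _).
  by have := hlam j x; rewrite subr_ge0 => /andP[_ /ltW].
have SE t : (\int[P]_x (memFDP_SAFFRON dd e al lam t x)%:E =
    \sum_(1 <= j < t.+1) \int[P]_x (h j x)%:E)%E.
  by rewrite /memFDP_SAFFRON; apply: int_sum.
have b1 t : (\int[P]_x (memFDP_star dd theta e al t x)%:E
                 <= \int[P]_x (memFDP_SAFFRON dd e al lam t x)%:E)%E.
  rewrite star_int SE.
  apply: (@le_trans _ _ (\sum_(1 <= j < t.+1 | ~~ theta j) \int[P]_x (h j x)%:E)%E); last first.
    by apply: sub_sum => j; apply: integral_ge0 => x _; rewrite lee_fin.
  rewrite big_nat_cond [leRHS]big_nat_cond; apply: lee_sum => j /andP[/andP[j1 _] nj].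
  apply: (@K2 _ _ _ e al me mal P j.-1 (e j) (gj _ _ _ e al dd j) (lam j)) => //.
  - exact: hC.
  - by move=> v x y Hx Hy; apply: gj_const => //; exact: hF.
  - by move=> v x y Hx Hy; apply: Fmeas_const Hx Hy; exact: hFl.
  - by move=> x; exact: gj_ge0.
  - exact: mgj.
split => // hS t.
apply: le_trans (coreT t) _.
case: t => [|t]; first by rewrite big_geq // lee_fin ltW.
rewrite -star_int; apply: le_trans (b1 t.+1) _.
apply: finB; first exact: hS.
  by move=> x; apply: sumr_ge0 => j _; exact: h0.
by rewrite /memFDP_SAFFRON; apply: msum_cond.
Qed.
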